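(* Let $N$ and $M$ be matroids on a common finite ground set $E$ such that every independent set of $M$ is independent in $N$. Then $N\ominus M=(N^*\vee M)^*$, i.e. the independent sets of $N\ominus M$ are exactly the independent sets of $(N^*\vee M)^*$.
   Context: For matroids $N,M$ on the same ground set $E$ with $\mathcal{L}(M)\subseteq\mathcal{L}(N)$, $N\ominus M=(E,\mathcal{L}(N\ominus M))$ where $\mathcal{L}(N\ominus M)=\{S: \exists$ a base $B_N$ of $N$ and a base $B_M$ of $M$ with $B_M\subseteq B_N$ and $S\subseteq B_N\setminus B_M\}$. The dual $N^*$ of a matroid $N$ on $E$ has as independent sets the subsets of $E\setminus B$ for bases $B$ of $N$. The union $A\vee B$ of matroids $A,B$ has ground set $E(A)\cup E(B)$ and independent sets $\{S\cup T: S\in\mathcal{L}(A),\ T\in\mathcal{L}(B)\}$. *)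

(* Defs.v *)
From mathcomp Require Import all_boot.
Set Implicit Arguments. Unset Strict Implicit. Unset Printing Implicit Defensive.

(* A matroid on the finite ground set E = [set: T], given by its family of
   independent sets. *)
Record matroid (T : finType) := Matroid {
  indep : {set {set T}};
  indep0 : set0 \in indep;
  indep_sub : forall A B : {set T}, B \in indep -> A \subset B -> A \in indep;
  indep_aug : forall A B : {set T}, A \in indep -> B \in indep ->
      #|A| < #|B| -> exists2 x, x \in B :\: A & x |: A \in indep
}.

Section Ops.
Variable T : finType.

Definition bases (I : {set {set T}}) : {set {set T}} :=
  [set B in I | [forall A in I, (B \subset A) ==> (A == B)]].

Definition dual_indep (I : {set {set T}}) : {set {set T}} :=
  [set S : {set T} | [exists B in bases I, S \subset ~: B]].

Definition union_indep (I1 I2 : {set {set T}}) : {set {set T}} :=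
  [set S : {set T} | [exists X in I1, exists Y in I2, S == X :|: Y]].

Definition ominus_indep (IN IM : {set {set T}}) : {set {set T}} :=
  [set S : {set T} | [exists BN in bases IN, exists BM in bases IM,
     (BM \subset BN) && (S \subset BN :\: BM)]].
End Ops.

(* Main.v *)
Require Import Defs.
From mathcomp Require Import all_boot.
From mathcomp Require Import zify.
Set Implicit Arguments. Unset Strict Implicit.

Section Aux.
Variable T : finType.
Variable M : matroid T.

Lemma base_indep {B} : B \in bases (indep M) -> B \in indep M.
Proof. by rewrite inE => /andP[]. Qed.

Lemma base_max {A B} : A \in indep M -> B \in bases (indep M) -> #|A| <= #|B|.
Proof.
move=> hA hB; rewrite leqNgt; apply/negP => lt.
have [x] := indep_aug (base_indep hB) hA lt.
rewrite inE => /andP[xB _] hx.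
move: hB; rewrite inE => /andP[_ /forallP /(_ (x |: B))].
rewrite hx /= subsetUr /= => /eqP e.
by move: xB; rewrite -e setU11.
Qed.

Lemma cardmax_base K : K \in indep M ->
  (forall K', K' \in indep M -> #|K'| <= #|K|) -> K \in bases (indep M).
Proof.
move=> hK hmax; rewrite inE hK /=; apply/forallP => A; apply/implyP => hA.
apply/implyP => sKA; by rewrite eq_sym eqEcard sKA hmax.
Qed.

Lemma exists_base : exists B, B \in bases (indep M).
Proof.
case: (@arg_maxnP _ set0 (fun K => K \in indep M) (fun K => #|K|) (indep0 M)).
move=> K hK hmax; exists K; exact: cardmax_base.
Qed.

Lemma ext_base {A B} : A \in indep M -> B \in bases (indep M) ->
  exists2 B', B' \in bases (indep M) & (A \subset B') && (B' \subset A :|: B).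
Proof.
move=> hA hB.
pose P K := [&& K \in indep M, A \subset K & K \subset A :|: B].
have PA : P A by rewrite /P hA subxx subsetUl.
case: (@arg_maxnP _ A P (fun K => #|K|) PA) => K.
rewrite /P => /and3P[hK sAK sKAB] hmax.
have geB : #|B| <= #|K|.
  rewrite leqNgt; apply/negP => lt.
  have [x] := indep_aug hK (base_indep hB) lt.
  rewrite inE => /andP[xK xB] hx.
  have := hmax (x |: K); rewrite /P hx (subset_trans sAK (subsetUr _ _)).
  rewrite subUset sub1set (subsetP (subsetUr A B)) // sKAB /= => /(_ isT).
  by rewrite cardsU1 xK add1n ltnn.
exists K; last by rewrite sAK sKAB.
apply: cardmax_base => // K' hK'.
exact: leq_trans (base_max hK' hB) geB.
Qed.

End Aux.

Theorem theorem3p4p2 (T : finType) (N M : matroid T) :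
  indep M \subset indep N ->
  ominus_indep (indep N) (indep M) =
  dual_indep (union_indep (dual_indep (indep N)) (indep M)).
Proof.
move=> sMN; apply/setP => S; rewrite !inE; apply/idP/idP.
- case/exists_inP => BN hBN /exists_inP [BM hBM /andP[sMN' sS]].
  apply/exists_inP; exists (~: BN :|: BM); last first.
    by rewrite setCU setCK -setDE.
  have CU : ~: BN :|: BM \in union_indep (dual_indep (indep N)) (indep M).
    rewrite inE; apply/exists_inP; exists (~: BN).
      by rewrite inE; apply/exists_inP; exists BN.
    by apply/exists_inP; exists BM => //; exact: base_indep.
  rewrite inE CU /=; apply/forall_inP => D.
  rewrite inE => /exists_inP [X] hX /exists_inP [Y hY /eqP ->].
  apply/implyP => sC; rewrite eq_sym eqEcard sC /=.
  move: hX; rewrite inE => /exists_inP [B hB sXB].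
  have e1 := base_max (base_indep hB) hBN.
  have e2 := base_max (base_indep hBN) hB.
  have e3 := base_max hY hBM.
  have e4 := subset_leq_card sXB.
  have e5 : #|X :|: Y| <= #|X| + #|Y| by case: (leq_card_setU X Y).
  have c1 := cardsC B.
  have c2 := cardsC BN.
  have E0 : ~: BN :&: BM = set0.
    apply/setP => x; rewrite !inE; apply/negP => /andP[xN xM].
    by move: xN; rewrite (subsetP sMN').
  have c3 := cardsU (~: BN) BM.
  rewrite E0 cards0 subn0 in c3.
  have e8 : #|BM| <= #|BN| by apply: subset_leq_card.
  lia.
- case/exists_inP => C hC sSC.
  move: (hC); rewrite inE => /andP[hCU hCmax].
  move: hCU; rewrite inE => /exists_inP [X hX /exists_inP [Y hY /eqP eC]].
  move: hX; rewrite inE => /exists_inP [B hB sXB].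
  have [BM0 hBM0] := exists_base M.
  have [BM hBM /andP[sYBM _]] := ext_base hY hBM0.
  have inU Z W : Z \in bases (indep N) -> W \in indep M ->
      ~: Z :|: W \in union_indep (dual_indep (indep N)) (indep M).
    move=> hZ hW; rewrite inE; apply/exists_inP; exists (~: Z) => //.
      by rewrite inE; apply/exists_inP; exists Z.
    by apply/exists_inP; exists W.
  have eC1 : ~: B :|: BM = C.
    apply/eqP; move/forall_inP: hCmax => /(_ _ (inU _ _ hB (base_indep hBM))).
    move/implyP; apply; rewrite eC; exact: setUSS.
  have [B' hB' /andP[sMB' sB'MB]] := ext_base (subsetP sMN _ (base_indep hBM)) hB.
  have eC2 : ~: B' :|: BM = C.
    apply/eqP; move/forall_inP: hCmax => /(_ _ (inU _ _ hB' (base_indep hBM))).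
    move/implyP; apply; rewrite -eC1; apply/subsetP => x; rewrite !inE.
    case xM: (x \in BM); rewrite ?orbT // !orbF => xB; apply/negP => xB'.
    by move: (subsetP sB'MB x xB'); rewrite inE xM (negbTE xB).
  apply/exists_inP; exists B' => //; apply/exists_inP; exists BM => //.
  rewrite sMB' /=; apply: (subset_trans sSC).
  by rewrite -eC2 setCU setCK setDE.
Qed.
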